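(* Let $G$ be a nilpotent group of class $5$. Then for all $g,h\in G$ and all $n\in\mathbb{N}$, $$g^n\wedge h = ([g,h]\wedge [g,g,g,h])^{\binom{n}{4}} ([g,h]\wedge [g,g,h])^{\binom{n}{3}} (g\wedge [g,g,g,g,h])^{\binom{n}{5}} (g\wedge [g,g,g,h])^{\binom{n}{4}} (g\wedge [g,g,h])^{\binom{n}{3}} (g\wedge [g,h])^{\binom{n}{2}} (g\wedge h)^n$$ in the exterior square $G\wedge G$.
   Context: Conventions: ${}^g h = ghg^{-1}$, $[g,h]=ghg^{-1}h^{-1}$, and commutators are right normed: $[a,b,c]=[a,[b,c]]$, $[a,b,c,d]=[a,[b,[c,d]]]$, etc. $\binom{n}{r}=0$ if $r>n$. The nonabelian tensor square $G\otimes G$ is generated by symbols $g\otimes h$ subject to $gg'\otimes h=({}^g g'\otimes {}^g h)(g\otimes h)$ and $g\otimes hh'=(g\otimes h)({}^h g\otimes {}^h h')$; the exterior square $G\wedge G$ is its quotient by the subgroup generated by all $x\otimes x$, and $g\wedge h$ denotes the image of $g\otimes h$. *)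

(* Defs.v *)
From mathcomp Require Import all_boot.
Set Implicit Arguments. Unset Strict Implicit. Unset Printing Implicit Defensive.

Record AbsGroup := {
  carrier :> Type;
  gmul : carrier -> carrier -> carrier;
  gone : carrier;
  ginv : carrier -> carrier;
  gmulA : forall x y z, gmul x (gmul y z) = gmul (gmul x y) z;
  gmul1 : forall x, gmul gone x = x;
  gmulV : forall x, gmul (ginv x) x = gone
}.

Arguments gmul {a}. Arguments gone {a}. Arguments ginv {a}.

Section Ops.
Variable G : AbsGroup.

Definition conj (g h : G) : G := gmul (gmul g h) (ginv g).
Definition comm (g h : G) : G := gmul (gmul (gmul g h) (ginv g)) (ginv h).

Fixpoint gpow (g : G) (n : nat) : G :=
  match n with 0 => gone | S m => gmul (gpow g m) g end.

Inductive gen (S : G -> Prop) : G -> Prop :=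
| gen_base x : S x -> gen S x
| gen_one : gen S gone
| gen_mul x y : gen S x -> gen S y -> gen S (gmul x y)
| gen_inv x : gen S x -> gen S (ginv x).

(* lower central series: lcs 1 = G (also lcs 0 = G), lcs (i+1) = [lcs i, G] *)
Fixpoint lcs (i : nat) : G -> Prop :=
  match i with
  | 0 => fun _ => True
  | 1 => fun _ => True
  | S j => gen (fun z => exists x y, lcs j x /\ z = comm x y)
  end.

Definition nilpotent_of_class (c : nat) : Prop :=
  (forall x, lcs c.+1 x -> x = gone) /\ (exists x, lcs c x /\ x <> gone).
End Ops.

(* An exterior pairing G x G -> L: a map satisfying the defining relations of the
   nonabelian exterior square. G /\ G is the universal such pairing, so an identity
   among the generators g /\ h holds in G /\ G iff it holds for every exterior pairing. *)
Definition exterior_pairing (G L : AbsGroup) (phi : G -> G -> L) : Prop :=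
  (forall g g' h : G,
      phi (gmul g g') h = gmul (phi (conj g g') (conj g h)) (phi g h)) /\
  (forall g h h' : G,
      phi g (gmul h h') = gmul (phi g h) (phi (conj h g) (conj h h'))) /\
  (forall x : G, phi x x = gone).

(* Main.v *)
From Pilot Require Import Defs.
From mathcomp Require Import all_boot zify.
Set Implicit Arguments. Unset Strict Implicit. Unset Printing Implicit Defensive.

Section Grp.
Variable G : AbsGroup.
Implicit Types x y z a b : G.

Lemma mulA' x y z : gmul (gmul x y) z = gmul x (gmul y z).
Proof. by rewrite gmulA. Qed.
Lemma mul1 x : gmul gone x = x. Proof. exact: gmul1. Qed.
Lemma mulV x : gmul (ginv x) x = gone. Proof. exact: gmulV. Qed.
Lemma mulVr x : gmul x (ginv x) = gone.
Proof.
rewrite -[gmul x (ginv x)]mul1 -(mulV (ginv x)) mulA'.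
by rewrite (gmulA (ginv x) x) mulV mul1 mulV.
Qed.
Lemma mulr1 x : gmul x gone = x.
Proof. by rewrite -(mulV x) gmulA mulVr mul1. Qed.
Lemma inv_uniq x y : gmul x y = gone -> ginv x = y.
Proof. by move=> H; rewrite -[ginv x]mulr1 -H gmulA mulV mul1. Qed.
Lemma invM x y : ginv (gmul x y) = gmul (ginv y) (ginv x).
Proof. by apply: inv_uniq; rewrite mulA' (gmulA y) mulVr mul1 mulVr. Qed.
Lemma invI x : ginv (ginv x) = x.
Proof. by apply: inv_uniq; rewrite mulV. Qed.
Lemma inv1 : ginv (@gone G) = gone.
Proof. by apply: inv_uniq; rewrite mul1. Qed.
Lemma canc1 x y : gmul x (gmul (ginv x) y) = y.
Proof. by rewrite gmulA mulVr mul1. Qed.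
Lemma canc2 x y : gmul (ginv x) (gmul x y) = y.
Proof. by rewrite gmulA mulV mul1. Qed.
Lemma mul_cancl x y z : gmul x y = gmul x z -> y = z.
Proof. by move=> H; rewrite -(canc2 x y) H canc2. Qed.
Lemma mul_cancr x y z : gmul y x = gmul z x -> y = z.
Proof. by move=> H; rewrite -(mulr1 y) -(mulVr x) -mulA' H mulA' mulVr mulr1. Qed.
End Grp.

Ltac lsimpl :=
  repeat progress rewrite ?invM ?invI ?inv1 ?mulA' ?mul1 ?mulr1 ?mulV ?mulVr ?canc1 ?canc2.
Ltac gsimp := unfold Pilot.Defs.conj, Pilot.Defs.comm; lsimpl.

Section Lcs.
Variable G : AbsGroup.
Implicit Types x y z a b : G.

Lemma lcs_one k : lcs k (@gone G).
Proof. by case: k => [|[|k]] //=; exact: gen_one. Qed.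
Lemma lcs_mul k x y : lcs k x -> lcs k y -> lcs k (gmul x y).
Proof. by case: k => [|[|k]] //= *; exact: gen_mul. Qed.
Lemma lcs_inv k x : lcs k x -> lcs k (ginv x).
Proof. by case: k => [|[|k]] //= *; exact: gen_inv. Qed.
Lemma lcs_conj k z x : lcs k x -> lcs k (conj z x).
Proof.
elim: k z x => [|k IH] z x //; case: k IH => [|k] IH //= Hx.
elim: Hx => {x} [w [a [b [Ha ->]]]| |x y _ Hx _ Hy| x _ Hx].
- apply: gen_base; exists (conj z a), (conj z b); split; first exact: IH.
  by gsimp.
- have -> : conj z (@gone G) = gone by gsimp.
  exact: gen_one.
- have -> : conj z (gmul x y) = gmul (conj z x) (conj z y) by gsimp.
 
  exact: gen_mul.
- have -> : conj z (ginv x) = ginv (conj z x) by gsimp.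
  exact: gen_inv.
Qed.
Lemma lcs_comm k a b : lcs k a -> lcs k (comm a b).
Proof.
move=> Ha; have -> : comm a b = gmul a (conj b (ginv a)) by gsimp.
by apply: lcs_mul => //; apply: lcs_conj; apply: lcs_inv.
Qed.
Lemma lcs_dec k x : lcs k.+1 x -> lcs k x.
Proof.
case: k => [|k] // Hx.
have {}Hx : gen (fun z => exists x y, lcs k.+1 x /\ z = comm x y) x := Hx.
elim: Hx => {x} [w [a [b [Ha ->]]]| |x y _ Hx _ Hy| x _ Hx].
- exact: lcs_comm.
- exact: lcs_one.
- exact: lcs_mul.
- exact: lcs_inv.
Qed.
Lemma lcs_le m k x : m <= k -> lcs k x -> lcs m x.
Proof.
move=> /subnK <-; elim: (k - m) x => [|d IH] x; first by rewrite add0n.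
by rewrite addSn => /lcs_dec; apply: IH.
Qed.

Lemma comm_lcs j i x y : lcs i.+1 x -> lcs j.+1 y -> lcs (i + j).+2 (comm x y).
Proof.
elim: j i x y => [|j IH] i x y Hx Hy.
  by rewrite addn0 /=; apply: gen_base; exists x, y.
have {}Hy : gen (fun z => exists x y, lcs j.+1 x /\ z = comm x y) y := Hy.
elim: Hy => {y} [w [a [b [Ha ->]]]| |y1 y2 _ H1 _ H2| y _ Hy].
- set c := conj (ginv b) x.
  have -> : comm x (comm a b) =
     gmul (comm (comm b c) (conj c a)) (comm (comm c a) (conj a b)).
    by rewrite /c; gsimp.
  have Hc : lcs i.+1 c by apply: lcs_conj.
  apply: lcs_mul.
  + have -> : (i + j.+1).+2 = (i.+1 + j).+2 by rewrite addnS addSn.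
    apply: IH; last exact: lcs_conj.
    have -> : comm b c = ginv (comm c b) by gsimp.
    by apply: lcs_inv => /=; apply: gen_base; exists c, b.
  + rewrite addnS /=; apply: gen_base; exists (comm c a), (conj a b); split => //.
    exact: IH.
- have -> : comm x (@gone G) = gone by gsimp.
  exact: lcs_one.
- have -> : comm x (gmul y1 y2) = gmul (comm x y1) (conj y1 (comm x y2)) by gsimp.
  by apply: lcs_mul => //; apply: lcs_conj.
- have -> : comm x (ginv y) = conj (ginv y) (ginv (comm x y)) by gsimp.
  by apply: lcs_conj; apply: lcs_inv.
Qed.
End Lcs.

Lemma conjE (G : AbsGroup) (x y : G) : conj x y = gmul (comm x y) y.
Proof. by gsimp. Qed.

Section Wedge.
Variables (G L : AbsGroup) (phi : G -> G -> L).
Hypothesis ax1 : forall g g' h : G,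
      phi (gmul g g') h = gmul (phi (conj g g') (conj g h)) (phi g h).
Hypothesis ax2 : forall g h h' : G,
      phi g (gmul h h') = gmul (phi g h) (phi (conj h g) (conj h h')).
Hypothesis ax3 : forall x : G, phi x x = gone.
Implicit Types a b c d x y z : G.

Lemma conj_mul a b c : conj a (gmul b c) = gmul (conj a b) (conj a c).
Proof. by gsimp. Qed.

Lemma phi1l z : phi gone z = gone.
Proof.
have H := ax1 gone gone z.
have E1 : conj (@gone G) gone = gone by gsimp.
have E2 : conj (@gone G) z = z by gsimp.
rewrite E1 E2 mul1 in H.
by apply: (@mul_cancr _ (phi gone z)); rewrite mul1 -H.
Qed.

Lemma phi1r z : phi z gone = gone.
Proof.
have H := ax2 z gone gone.
have E1 : conj (@gone G) gone = gone by gsimp.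
have E2 : conj (@gone G) z = z by gsimp.
rewrite E1 E2 mul1 in H.
by apply: (@mul_cancl _ (phi z gone)); rewrite mulr1 -H.
Qed.

Lemma phi_anti a b : gmul (phi a b) (phi b a) = gone.
Proof.
have H : phi (gmul a b) (gmul a b) = gone by apply: ax3.
have E : gmul a b = gmul b (conj (ginv b) a) by gsimp.
rewrite {2}E (ax2 (gmul a b) b) in H.
have E1 : conj b (gmul a b) = gmul b a by gsimp.
have E2 : conj b (conj (ginv b) a) = a by gsimp.
rewrite E1 E2 (ax1 a b b) (ax1 b a a) !ax3 !mul1 in H.
exact: H.
Qed.

Lemma phi_sym a b : phi b a = ginv (phi a b).
Proof. by apply/esym/inv_uniq/phi_anti. Qed.

Lemma phi_invl k z : gmul (phi k (conj (ginv k) z)) (phi (ginv k) z) = gone.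
Proof.
have H := ax1 (ginv k) k z.
have E1 : gmul (ginv k) k = gone by gsimp.
have E2 : conj (ginv k) k = k by gsimp.
by rewrite E1 E2 phi1l in H.
Qed.

Lemma E5 a b c d :
  gmul (phi (conj (comm a b) c) (conj (comm a b) d)) (phi a b) =
  gmul (phi a b) (phi c d).
Proof.
set c0 := conj (ginv (gmul b a)) c.
set d0 := conj (ginv (gmul b a)) d.
have HA : phi (gmul a c0) (gmul b d0) =
  gmul (gmul (gmul (phi (conj a c0) (conj a b))
    (phi (conj (conj a b) (conj a c0)) (conj (conj a b) (conj a d0))))
    (phi a b)) (phi (conj b a) (conj b d0)).
  by rewrite (ax1 a c0) conj_mul (ax2 (conj a c0) (conj a b)) (ax2 a b d0) !mulA'.
have HB : phi (gmul a c0) (gmul b d0) =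
  gmul (gmul (gmul (phi (conj a c0) (conj a b)) (phi a b))
    (phi (conj (conj b a) (conj b c0)) (conj (conj b a) (conj b d0))))
    (phi (conj b a) (conj b d0)).
  by rewrite (ax2 (gmul a c0) b d0) (ax1 a c0 b) conj_mul (ax1 (conj b a)) !mulA'.
rewrite HA in HB; move/mul_cancr: HB; rewrite !mulA' => /mul_cancl.
have -> : conj (conj a b) (conj a c0) = conj (comm a b) c by rewrite /c0; gsimp.
have -> : conj (conj a b) (conj a d0) = conj (comm a b) d by rewrite /d0; gsimp.
have -> : conj (conj b a) (conj b c0) = c by rewrite /c0; gsimp.
have -> : conj (conj b a) (conj b d0) = d by rewrite /d0; gsimp.
by [].
Qed.

Lemma Sstar a b x :
  gmul (phi a b) (phi (conj b a) x) = gmul (phi a x) (phi (conj x a) (conj x b)).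
Proof.
have H1 := ax2 a b (conj (ginv b) x).
have H2 := ax2 a x b.
have E : gmul b (conj (ginv b) x) = gmul x b by gsimp.
have E2 : conj b (conj (ginv b) x) = x by gsimp.
by rewrite E E2 H2 in H1.
Qed.

Lemma E4 a b x :
  phi (comm a b) x = gmul (phi a b) (ginv (phi (conj x a) (conj x b))).
Proof.
set K := conj (gmul a b) a.
have E : comm a b = gmul a (conj b (ginv a)) by gsimp.
rewrite E (ax1 a).
have -> : conj a (conj b (ginv a)) = ginv K by rewrite /K; gsimp.
have HI := phi_invl K (conj a x).
have -> : phi (ginv K) (conj a x) = ginv (phi K (conj (ginv K) (conj a x))).
  by apply/esym/inv_uniq.
have -> : conj (ginv K) (conj a x) = conj (comm a b) x by rewrite /K; gsimp.
have -> : K = conj (comm a b) (conj b a) by rewrite /K; gsimp.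
have H5 := E5 a b (conj b a) x.
have H6 : phi (conj (comm a b) (conj b a)) (conj (comm a b) x) =
   gmul (gmul (phi a b) (phi (conj b a) x)) (ginv (phi a b)).
  by rewrite -H5; gsimp.
rewrite H6.
have H7 : phi (conj b a) x =
   gmul (ginv (phi a b)) (gmul (phi a x) (phi (conj x a) (conj x b))).
  by rewrite -Sstar; gsimp.
rewrite H7; gsimp; by [].
Qed.

Lemma E3 a b x :
  phi x (comm a b) = gmul (phi (conj x a) (conj x b)) (ginv (phi a b)).
Proof. by rewrite phi_sym E4; gsimp. Qed.

Lemma commPhi a b c d :
  gmul (phi a b) (phi c d) =
  gmul (gmul (phi (comm a b) (comm c d)) (phi c d)) (phi a b).
Proof. by rewrite -E5 E3; gsimp. Qed.

End Wedge.

Section Van.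
Variables (G L : AbsGroup) (phi : G -> G -> L).
Hypothesis ax1 : forall g g' h : G,
      phi (gmul g g') h = gmul (phi (conj g g') (conj g h)) (phi g h).
Hypothesis ax2 : forall g h h' : G,
      phi g (gmul h h') = gmul (phi g h) (phi (conj h g) (conj h h')).
Hypothesis ax3 : forall x : G, phi x x = gone.
Hypothesis hG : forall x : G, lcs 6 x -> x = gone.
Implicit Types a b c d x y z w : G.

Lemma triv k x : 6 <= k -> lcs k x -> x = gone.
Proof. by move=> Hk /(lcs_le Hk); apply: hG. Qed.

Lemma conj_triv x a : comm x a = gone -> conj x a = a.
Proof.
move=> H; have -> : conj x a = gmul (comm x a) a by gsimp.
by rewrite H mul1.
Qed.

Lemma Main p q : q <= p -> 7 <= p + q ->
  (forall r s x y, p < s -> 7 <= r + s -> lcs r x -> lcs s y -> phi x y = gone) ->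
  forall x y, lcs p x -> lcs q y -> phi x y = gone.
Proof.
move=> Hqp Hpq H x y Hx Hy.
case: (leqP 6 p) => Hp6.
  by rewrite (triv Hp6 Hx) (phi1l ax1).
case: q Hqp Hpq Hy => [|[|q']] Hqp Hpq Hy; try lia.
case: p Hqp Hpq H Hx Hp6 => [|p'] Hqp Hpq H Hx Hp6; first lia.
have Y : forall y, lcs q'.+2 y -> forall w x, lcs p'.+1 x -> phi x (conj w y) = gone.
  move=> yy Hy'.
  have {}Hy' : gen (fun z => exists x y, lcs q'.+1 x /\ z = comm x y) yy := Hy'.
  elim: Hy' => {yy} [u [a [b [Ha ->]]]| |y1 y2 _ H1 _ H2| y0 _ H0] w x0 Hx0.
  - have -> : conj w (comm a b) = comm (conj w a) (conj w b) by gsimp.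
    have Ha' : lcs q'.+1 (conj w a) by apply: lcs_conj.
    move: (conj w a) Ha' (conj w b) => a' Ha' b'.
    have Q : forall k s z b0, 6 <= s + k -> p'.+1 < s -> lcs s z ->
        phi a' (gmul z b0) = phi a' b0.
      elim=> [|k IHk] s z b0 Hsk Hps Hz.
        by rewrite (triv _ Hz) ?mul1 //; lia.
      case: (leqP 6 s) => Hs6; first by rewrite (triv Hs6 Hz) mul1.
      rewrite ax2 (H _ _ _ _ Hps _ Ha' Hz); last by lia.
      case: s Hsk Hps Hz Hs6 => [|s'] Hsk Hps Hz Hs6; first lia.
      rewrite (@conj_triv z a'); last first.
        by apply: (triv _ (comm_lcs Hz Ha')); lia.
      rewrite (conjE z b0).
      rewrite mul1; apply: (IHk s'.+2) => //; try lia.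
      by have := @comm_lcs _ 0 s' z b0 Hz I; rewrite addn0.
    rewrite (E3 ax1 ax2 ax3) (@conj_triv x0 a'); last first.
      by apply: (triv _ (comm_lcs Hx0 Ha')); lia.
    rewrite (conjE x0 b') (Q 6 p'.+2); [by rewrite mulVr| lia | lia |].
    by have := @comm_lcs _ 0 p' x0 b' Hx0 I; rewrite addn0.
  - have -> : conj w (@gone G) = gone by gsimp.
    exact: (phi1r ax2).
  - have -> : conj w (gmul y1 y2) = gmul (conj w y1) (conj w y2) by gsimp.
    rewrite ax2 H1 // mul1.
    have -> : conj (conj w y1) (conj w y2) = conj (gmul (conj w y1) w) y2 by gsimp.
    by apply: H2; apply: lcs_conj.
  - have -> : conj w (ginv y0) = ginv (conj w y0) by gsimp.
    move: (conj w y0) (H0 w) => Y0 HY0.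
    have E := ax2 x0 (ginv Y0) Y0.
    have E2 : conj (ginv Y0) Y0 = Y0 by gsimp.
    rewrite mulV (phi1r ax2) E2 (HY0 (conj (ginv Y0) x0)) ?mulr1 in E;
      [by rewrite E | exact: lcs_conj].
have E : conj gone y = y by gsimp.
by have := Y y Hy gone x Hx; rewrite E.
Qed.

Lemma V k p q x y : 6 <= maxn p q + k -> 7 <= p + q -> lcs p x -> lcs q y ->
  phi x y = gone.
Proof.
elim: k p q x y => [|k IH] p q x y Hk Hpq Hx Hy.
  case: (leqP 6 p) => Hp; first by rewrite (triv Hp Hx) (phi1l ax1).
  by rewrite (@triv q y) ?(phi1r ax2) //; lia.
case: (leqP q p) => Hqp.
  apply: (Main Hqp Hpq) => // r s x1 y1 Hs Hrs; apply: IH => //; lia.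
rewrite (phi_sym ax1 ax2 ax3) (@Main q p) ?inv1 //; try lia.
by move=> r s x1 y1 Hs Hrs; apply: IH => //; lia.
Qed.

Lemma V7 p q x y : 7 <= p + q -> lcs p x -> lcs q y -> phi x y = gone.
Proof. by apply: (V (k:=6)); lia. Qed.
End Van.

Section Pow.
Variable L : AbsGroup.
Implicit Types x y z : L.
Definition gcommute x y := gmul x y = gmul y x.

Lemma gcomm_sym x y : gcommute x y -> gcommute y x.
Proof. by []. Qed.
Lemma gcomm1 x : gcommute x gone.
Proof. by rewrite /gcommute mul1 mulr1. Qed.
Lemma gcomm_refl x : gcommute x x.
Proof. by []. Qed.
Lemma gcommM x y z : gcommute x y -> gcommute x z -> gcommute x (gmul y z).
Proof.
rewrite /gcommute => H1 H2.
by rewrite gmulA H1 mulA' H2 gmulA.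
Qed.
Lemma gpow0 x : gpow x 0 = gone. Proof. by []. Qed.
Lemma gpowS x n : gpow x n.+1 = gmul (gpow x n) x. Proof. by []. Qed.
Lemma gpow1 x : gpow x 1 = x. Proof. by rewrite gpowS gpow0 mul1. Qed.
Lemma gcommX x y n : gcommute x y -> gcommute x (gpow y n).
Proof.
move=> H; elim: n => [|n IH]; first exact: gcomm1.
by rewrite gpowS; apply: gcommM.
Qed.
Lemma gcommXX x y m n : gcommute x y -> gcommute (gpow x m) (gpow y n).
Proof.
move=> H; apply: gcommX; apply: gcomm_sym; apply: gcommX; exact: gcomm_sym.
Qed.
Lemma gpow_self x n : gmul x (gpow x n) = gpow x n.+1.
Proof. by rewrite gpowS; apply: gcommX; apply: gcomm_refl. Qed.
Lemma gpowD x m n : gpow x (m + n) = gmul (gpow x m) (gpow x n).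
Proof.
elim: n => [|n IH]; first by rewrite addn0 gpow0 mulr1.
by rewrite addnS !gpowS IH mulA'.
Qed.
Lemma twist x y z m : gmul x y = gmul (gmul z y) x -> gcommute z y ->
  gmul x (gpow y m) = gmul (gmul (gpow z m) (gpow y m)) x.
Proof.
move=> Hxy Hzy; elim: m => [|m IH]; first by rewrite !gpow0 mulr1 !mul1.
have Hc : gmul (gpow y m) z = gmul z (gpow y m).
  by apply: gcomm_sym; apply: gcommX.
rewrite !gpowS gmulA IH mulA' Hxy; lsimpl.
by rewrite (@gmulA _ (gpow y m) z) Hc mulA'.
Qed.

Fixpoint prodl (xs : seq L) (es : seq nat) : L :=
  match xs, es with
  | x :: xs', e :: es' => gmul (gpow x e) (prodl xs' es')
  | _, _ => gone
  end.
Lemma prodl_cons x xs e es : prodl (x :: xs) (e :: es) = gmul (gpow x e) (prodl xs es).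
Proof. by []. Qed.
Lemma prodl_nil es : prodl [::] es = gone.
Proof. by []. Qed.
Fixpoint allc x (xs : seq L) : Prop :=
  match xs with [::] => True | y :: ys => gcommute x y /\ allc x ys end.
Fixpoint pwc (xs : seq L) : Prop :=
  match xs with [::] => True | y :: ys => allc y ys /\ pwc ys end.
Fixpoint addl (es fs : seq nat) : seq nat :=
  match es, fs with e :: es', f :: fs' => (e + f) :: addl es' fs' | _, _ => [::] end.

Lemma allc_prod x xs es : allc x xs -> gcommute x (prodl xs es).
Proof.
elim: xs es => [|y ys IH] [|e es] //=; try by move=> _; apply: gcomm1.
move=> [H1 H2]; apply: gcommM; last exact: IH.
exact: gcommX.
Qed.
Lemma allcX x xs m : allc x xs -> allc (gpow x m) xs.
Proof.
elim: xs => [|y ys IH] //= [H1 H2]; split; last exact: IH.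
apply: gcomm_sym; apply: gcommX; exact: gcomm_sym.
Qed.

Lemma prodl_add xs es fs : pwc xs -> size es = size xs -> size fs = size xs ->
  gmul (prodl xs es) (prodl xs fs) = prodl xs (addl es fs).
Proof.
elim: xs es fs => [|x xs IH] [|e es] [|f fs] //=; first by rewrite mul1.
move=> [H1 H2] [Hs1] [Hs2].
have Hc := allc_prod es (allcX f H1).
lsimpl; rewrite (@gmulA _ (prodl xs es)) -Hc mulA' IH //.
by rewrite gpowD mulA'.

Qed.
End Pow.

Lemma L6 (a1 a2 a3 a4 a5 a6 b1 b2 b3 b4 b5 b6 : nat) :
  a1 = b1 -> a2 = b2 -> a3 = b3 -> a4 = b4 -> a5 = b5 -> a6 = b6 ->
  [:: a1; a2; a3; a4; a5; a6] = [:: b1; b2; b3; b4; b5; b6].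
Proof. by move=> -> -> -> -> -> ->. Qed.

Lemma addl_cons e es f fs : addl (e :: es) (f :: fs) = (e + f) :: addl es fs.
Proof. by []. Qed.
Lemma addl_nil : addl [::] [::] = [::]. Proof. by []. Qed.

Ltac lst := rewrite !addl_cons addl_nil; try congr (prodl _ _); apply: L6; rewrite ?binS ?bin1 ?bin0; lia.

Section Asm.
Variables (L : AbsGroup) (u0 u1 u2 u3 u4 c12 c13 : L) (F : nat -> nat -> L).
Hypothesis Hpw : pwc [:: c13; c12; u4; u3; u2; u1].
Hypothesis Hu0 : allc u0 [:: c13; c12; u4; u3].
Hypothesis T1 : gmul u0 u1 = gmul (gmul c12 u1) u0.
Hypothesis T2 : gmul u0 u2 = gmul (gmul c13 u2) u0.
Hypothesis HF0 : forall k, F 0 k = gone.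
Hypothesis HF5 : forall n, F n 5 = gone.
Hypothesis R4 : forall n, F n.+1 4 = gmul (gmul (F n 5) u4) (F n 4).
Hypothesis R3 : forall n, F n.+1 3 = gmul (gmul (F n 4) u3) (F n 3).
Hypothesis R2 : forall n, F n.+1 2 = gmul (gmul (F n 3) u2) (F n 2).
Hypothesis R1 : forall n, F n.+1 1 = gmul (gmul (F n 2) u1) (F n 1).
Hypothesis R0 : forall n, F n.+1 0 = gmul (gmul (F n 1) u0) (F n 0).

Notation xs := [:: c13; c12; u4; u3; u2; u1].
Notation P e := (prodl xs e).

Ltac pexp := rewrite ?prodl_cons ?prodl_nil ?gpow0 ?gpow1; lsimpl.

Lemma Pz : P [:: 0; 0; 0; 0; 0; 0] = gone. Proof. by pexp. Qed.
Lemma Pu4 : P [:: 0; 0; 1; 0; 0; 0] = u4. Proof. by pexp. Qed.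
Lemma Pu3 : P [:: 0; 0; 0; 1; 0; 0] = u3. Proof. by pexp. Qed.
Lemma Pu2 : P [:: 0; 0; 0; 0; 1; 0] = u2. Proof. by pexp. Qed.
Lemma Pu1 : P [:: 0; 0; 0; 0; 0; 1] = u1. Proof. by pexp. Qed.

Lemma Pmul (x : L) e ei : P ei = x -> gmul (P e) x = gmul (P e) (P ei).
Proof. by move=> ->. Qed.

Lemma F4 n : F n 4 = P [:: 0; 0; n; 0; 0; 0].
Proof.
elim: n => [|n IH]; first by rewrite HF0 Pz.
by rewrite R4 HF5 -Pz (Pmul _ Pu4) IH !prodl_add //; lst.
Qed.
Lemma F3 n : F n 3 = P [:: 0; 0; 'C(n, 2); n; 0; 0].
Proof.
elim: n => [|n IH]; first by rewrite HF0 -Pz.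
by rewrite R3 F4 IH (Pmul _ Pu3) !prodl_add //; lst.
Qed.
Lemma F2 n : F n 2 = P [:: 0; 0; 'C(n, 3); 'C(n, 2); n; 0].
Proof.
elim: n => [|n IH]; first by rewrite HF0 -Pz.
by rewrite R2 F3 IH (Pmul _ Pu2) !prodl_add //; lst.
Qed.
Lemma F1 n : F n 1 = P [:: 0; 0; 'C(n, 4); 'C(n, 3); 'C(n, 2); n].
Proof.
elim: n => [|n IH]; first by rewrite HF0 -Pz.
by rewrite R1 F2 IH (Pmul _ Pu1) !prodl_add //; lst.
Qed.

Lemma U0P a b c d e f :
  gmul u0 (P [:: a; b; c; d; e; f]) = gmul (P [:: a + e; b + f; c; d; e; f]) u0.
Proof.
have E : P [:: a; b; c; d; e; f] =
    gmul (P [:: a; b; c; d; 0; 0]) (P [:: 0; 0; 0; 0; e; f]).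
  by rewrite prodl_add //; lst.
case: Hu0 => [H13 [H12 [H4 [H3 _]]]].
have C1 : gcommute u0 (P [:: a; b; c; d; 0; 0]).
  rewrite !prodl_cons prodl_nil !gpow0 !mul1 mulr1.
  by apply: gcommM; [exact: gcommX|apply: gcommM; [exact: gcommX|apply: gcommM; exact: gcommX]].
case: Hpw => [[_ [_ [_ [Hc13u2 _]]]] [[_ [_ [_ [Hc12u1 _]]]] _]].
have E2 : gmul u0 (P [:: 0; 0; 0; 0; e; f]) =
    gmul (gmul (P [:: e; 0; 0; 0; e; 0]) (P [:: 0; f; 0; 0; 0; f])) u0.
  rewrite !prodl_cons prodl_nil !gpow0 !mul1 !mulr1.
  rewrite gmulA (twist e T2 Hc13u2) mulA' (twist f T1 Hc12u1).
  by lsimpl.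
rewrite E gmulA C1 mulA' E2 gmulA -mulA' (prodl_add Hpw) //.
rewrite (prodl_add Hpw) //.
congr gmul; congr prodl; lst.
Qed.

Lemma F0 n : F n 0 =
  gmul (P [:: 'C(n, 4); 'C(n, 3); 'C(n, 5); 'C(n, 4); 'C(n, 3); 'C(n, 2)]) (gpow u0 n).
Proof.
elim: n => [|n IH]; first by rewrite HF0 Pz gpow0 mul1.
rewrite R0 F1 IH mulA' (gmulA u0) U0P mulA' gpow_self gmulA (prodl_add Hpw) //.
congr gmul; congr prodl; lst.
Qed.

Lemma Fin n : F n 0 =
  gmul (gmul (gmul (gmul (gmul (gmul
    (gpow c13 'C(n, 4)) (gpow c12 'C(n, 3))) (gpow u4 'C(n, 5)))
    (gpow u3 'C(n, 4))) (gpow u2 'C(n, 3))) (gpow u1 'C(n, 2))) (gpow u0 n).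
Proof. by rewrite F0 !prodl_cons prodl_nil mulr1 !gmulA. Qed.
End Asm.

Fixpoint hseq (G : AbsGroup) (g h : G) (k : nat) : G :=
  match k with 0 => h | k'.+1 => comm g (hseq g h k') end.

Section Final.
Variables (G L : AbsGroup) (phi : G -> G -> L).
Hypothesis ax1 : forall g g' h : G,
      phi (gmul g g') h = gmul (phi (conj g g') (conj g h)) (phi g h).
Hypothesis ax2 : forall g h h' : G,
      phi g (gmul h h') = gmul (phi g h) (phi (conj h g) (conj h h')).
Hypothesis ax3 : forall x : G, phi x x = gone.
Hypothesis hG : forall x : G, lcs 6 x -> x = gone.
Variables g h : G.

Lemma lcs_h k : lcs k.+1 (hseq g h k).
Proof.
elim: k => [|k IH] //=.
by have := @comm_lcs G k 0 g (hseq g h k) I IH; rewrite add0n.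
Qed.

Lemma commPhiV a b c d p q : 7 <= p + q -> lcs p (comm a b) -> lcs q (comm c d) ->
  gcommute (phi a b) (phi c d).
Proof.
move=> Hpq Hp Hq; rewrite /gcommute (commPhi ax1 ax2 ax3).
by rewrite (V7 ax1 ax2 ax3 hG Hpq Hp Hq) mul1.
Qed.

Notation u k := (phi g (hseq g h k)).
Notation c12 := (phi (hseq g h 1) (hseq g h 2)).
Notation c13 := (phi (hseq g h 1) (hseq g h 3)).

Lemma uu i j : 3 <= i + j -> gcommute (u i) (u j).
Proof.
move=> H; apply: (commPhiV (p := i.+2) (q := j.+2)); first by lia.
  exact: (lcs_h i.+1).
exact: (lcs_h j.+1).
Qed.
Lemma cu13 j : gcommute c13 (u j).
Proof.
apply: (commPhiV (p := 6) (q := j.+2)); first by lia.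
  exact: (@comm_lcs G 3 1 _ _ (lcs_h 1) (lcs_h 3)).
exact: (lcs_h j.+1).
Qed.
Lemma cu12 j : gcommute c12 (u j).
Proof.
apply: (commPhiV (p := 5) (q := j.+2)); first by lia.
  exact: (@comm_lcs G 2 1 _ _ (lcs_h 1) (lcs_h 2)).
exact: (lcs_h j.+1).
Qed.
Lemma c1312 : gcommute c13 c12.
Proof.
apply: (commPhiV (p := 6) (q := 5)) => //.
  exact: (@comm_lcs G 3 1 _ _ (lcs_h 1) (lcs_h 3)).
exact: (@comm_lcs G 2 1 _ _ (lcs_h 1) (lcs_h 2)).
Qed.

Lemma recF n y : phi (gpow g n.+1) y =
  gmul (gmul (phi (gpow g n) (comm g y)) (phi g y)) (phi (gpow g n) y).
Proof.
rewrite gpowS (ax1 (gpow g n) g y).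
have E := E3 ax1 ax2 ax3 g y (gpow g n).
have E' : phi (conj (gpow g n) g) (conj (gpow g n) y) =
   gmul (phi (gpow g n) (comm g y)) (phi g y) by rewrite E; lsimpl.
by rewrite E'.
Qed.

Lemma final n : phi (gpow g n) h =
  gmul (gmul (gmul (gmul (gmul (gmul
    (gpow c13 'C(n, 4)) (gpow c12 'C(n, 3))) (gpow (u 4) 'C(n, 5)))
    (gpow (u 3) 'C(n, 4))) (gpow (u 2) 'C(n, 3))) (gpow (u 1) 'C(n, 2))) (gpow (u 0) n).
Proof.
pose F n k := phi (gpow g n) (hseq g h k).
have Hpw : pwc [:: c13; c12; u 4; u 3; u 2; u 1].
  do !split; try exact: cu13; try exact: cu12; try exact: c1312;
    apply: uu; by [].
have Hu0 : allc (u 0) [:: c13; c12; u 4; u 3].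
  do !split; try (apply: gcomm_sym; first [exact: cu13 | exact: cu12]);
    apply: uu; by [].
have T1 := commPhi ax1 ax2 ax3 g (hseq g h 0) g (hseq g h 1).
have T2 := commPhi ax1 ax2 ax3 g (hseq g h 0) g (hseq g h 2).
have HF0 : forall k, F 0 k = gone by move=> k; exact: (phi1l ax1).
have HF5 : forall n, F n 5 = gone.
  by move=> m; apply: (V7 ax1 ax2 ax3 hG (p := 1) (q := 6)) => //; exact: (lcs_h 5).
have R : forall n k, F n.+1 k = gmul (gmul (F n k.+1) (u k)) (F n k).
  by move=> m k; rewrite /F recF.
exact: (@Fin L (u 0) (u 1) (u 2) (u 3) (u 4) c12 c13 F Hpw Hu0 T1 T2 HF0 HF5
  (fun m => R m 4) (fun m => R m 3) (fun m => R m 2) (fun m => R m 1) (fun m => R m 0) n).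
Qed.
End Final.

Theorem theorem3p3 (G : AbsGroup) (hG : nilpotent_of_class G 5)
  (L : AbsGroup) (wedge : G -> G -> L) (hw : exterior_pairing wedge)
  (g h : G) (n : nat) :
  wedge (gpow g n) h =
  gmul (gmul (gmul (gmul (gmul (gmul
    (gpow (wedge (comm g h) (comm g (comm g (comm g h)))) 'C(n, 4))
    (gpow (wedge (comm g h) (comm g (comm g h))) 'C(n, 3)))
    (gpow (wedge g (comm g (comm g (comm g (comm g h))))) 'C(n, 5)))
    (gpow (wedge g (comm g (comm g (comm g h)))) 'C(n, 4)))
    (gpow (wedge g (comm g (comm g h))) 'C(n, 3)))
    (gpow (wedge g (comm g h)) 'C(n, 2)))
    (gpow (wedge g h) n).
Proof.
case: hw => [ax1 [ax2 ax3]].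
case: hG => [hG6 _].
exact: (final ax1 ax2 ax3 hG6 g h n).
Qed.
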